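(* Let $t>1$ be an integer and $n$ sufficiently large. Among all $K_{t-1,t}$-saturated $n$ by $n$ bipartite graphs with minimum degree less than $t-1$, a graph $G$ has the minimum number of edges if and only if $G\in\mathcal{F}^n_{t-1,t}$ and $G$ has minimum degree $t-2$.
   Context: An $n$ by $n$ bipartite graph $G$ has two color classes $U,U'$ with $|U|=|U'|=n$. For $1\le s\le t$, such a $G$ is called $K_{s,t}$-saturated if $G$ contains no subgraph isomorphic to $K_{s,t}$ (with either side of $K_{s,t}$ lying in either class), but adding any missing edge $uu'$ with $u\in U$, $u'\in U'$ creates a subgraph isomorphic to $K_{s,t}$ (with either orientation). $\mathcal{F}^n_{s,t}$ denotes the family of $K_{s,t}$-free $n$ by $n$ bipartite graphs in which one of the color classes contains a set $S$ of $s-1$ vertices such that every vertex of $S$ is adjacent to all $n$ vertices of the other class, and every vertex of that same class not in $S$ has degree exactly $t-1$. (Each graph in $\mathcal{F}^n_{t-1,t}$ has exactly $(2t-3)n-(t-1)(t-2)$ edges.) *)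

(* Defs.v *)
From mathcomp Require Import all_boot.
Set Implicit Arguments. Unset Strict Implicit. Unset Printing Implicit Defensive.

(* An n by n bipartite graph with colour classes U = 'I_n and U' = 'I_n:
   the pair (u, u') is an edge iff (u, u') \in G. *)
Notation bigraph n := {set 'I_n * 'I_n}.

Section BiGraph.
Variable n : nat.
Implicit Types (G : bigraph n) (A B S : {set 'I_n}).

Definition degU G (u : 'I_n) : nat := #|[set v | (u, v) \in G]|.
Definition degV G (v : 'I_n) : nat := #|[set u | (u, v) \in G]|.

Definition has_Kst_oriented G (s t : nat) : Prop :=
  exists A B, [/\ #|A| = s, #|B| = t &
                  forall u v, u \in A -> v \in B -> (u, v) \in G].

Definition has_Kst G (s t : nat) : Prop :=
  has_Kst_oriented G s t \/ has_Kst_oriented G t s.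

Definition Kst_free G s t : Prop := ~ has_Kst G s t.

Definition Kst_saturated G s t : Prop :=
  Kst_free G s t /\
  forall u v, (u, v) \notin G -> has_Kst ((u, v) |: G) s t.

Definition mindeg_lt G k : Prop :=
  (exists u, degU G u < k) \/ (exists v, degV G v < k).

Definition mindeg_eq G k : Prop :=
  [/\ forall u, k <= degU G u, forall v, k <= degV G v &
      (exists u, degU G u = k) \/ (exists v, degV G v = k)].

Definition in_F G s t : Prop :=
  Kst_free G s t /\
  ((exists S, #|S| = s - 1 /\
      (forall u, u \in S -> forall v, (u, v) \in G) /\
      (forall u, u \notin S -> degU G u = t - 1))
   \/
   (exists S, #|S| = s - 1 /\
      (forall v, v \in S -> forall u, (u, v) \in G) /\
      (forall v, v \notin S -> degV G v = t - 1))).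

End BiGraph.

(* Main.v *)
Require Import Defs.
From mathcomp Require Import all_boot zify.
Set Implicit Arguments. Unset Strict Implicit. Unset Printing Implicit Defensive.

Section Basics.
Variable n : nat.
Implicit Types (G H : bigraph n).

Lemma card_sumU G : #|G| = \sum_u degU G u.
Proof.
rewrite /degU.
under eq_bigr => u _ do rewrite -sum1_card big_mkcond /=.
rewrite pair_bigA /= -sum1_card big_mkcond /=.
by apply: eq_bigr => [[u v]] _; rewrite inE.
Qed.

Lemma card_sumV G : #|G| = \sum_v degV G v.
Proof.
rewrite /degV.
under eq_bigr => u _ do rewrite -sum1_card big_mkcond /=.
rewrite exchange_big pair_bigA /= -sum1_card big_mkcond /=.
by apply: eq_bigr => [[u v]] _; rewrite inE.
Qed.

Definition trG G : bigraph n := [set p | (p.2, p.1) \in G].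

Lemma in_trG G u v : ((u, v) \in trG G) = ((v, u) \in G).
Proof. by rewrite inE. Qed.

Lemma trGK G : trG (trG G) = G.
Proof. by apply/setP => [[u v]]; rewrite !in_trG. Qed.

Lemma degU_tr G u : degU (trG G) u = degV G u.
Proof. by apply: eq_card => v; rewrite !inE. Qed.

Lemma degV_tr G v : degV (trG G) v = degU G v.
Proof. by apply: eq_card => u; rewrite !inE. Qed.

Lemma card_tr G : #|trG G| = #|G|.
Proof.
rewrite card_sumU card_sumV; apply: eq_bigr => u _; exact: degU_tr.
Qed.

Lemma orient_tr G s t : has_Kst_oriented (trG G) s t <-> has_Kst_oriented G t s.
Proof.
split => -[A [B [hA hB hAB]]]; exists B, A; split => // u v hu hv.
  by rewrite -in_trG; apply: hAB.
by rewrite in_trG; apply: hAB.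
Qed.

Lemma Kst_tr G s t : has_Kst (trG G) s t <-> has_Kst G s t.
Proof. rewrite /has_Kst !orient_tr; tauto. Qed.

Lemma tr_add G u v : trG ((u, v) |: G) = (v, u) |: trG G.
Proof.
apply/setP => [[a b]]; rewrite in_trG !in_setU1 in_trG !xpair_eqE.
by rewrite andbC.
Qed.

Lemma sat_tr G s t : Kst_saturated G s t -> Kst_saturated (trG G) s t.
Proof.
move=> [hf hs]; split.
  by rewrite /Kst_free Kst_tr.
move=> u v; rewrite in_trG => /hs; rewrite -Kst_tr tr_add //.
Qed.

Lemma mindeg_lt_tr G k : mindeg_lt G k -> mindeg_lt (trG G) k.
Proof.
by case=> -[x hx]; [right | left]; exists x; rewrite ?degU_tr ?degV_tr.
Qed.

Lemma mindeg_eq_tr G k : mindeg_eq G k -> mindeg_eq (trG G) k.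
Proof.
case=> h1 h2 h3; split => [u|v|]; rewrite ?degU_tr ?degV_tr //.
by case: h3 => -[x hx]; [right | left]; exists x; rewrite ?degU_tr ?degV_tr.
Qed.

Lemma in_F_tr G s t : in_F G s t -> in_F (trG G) s t.
Proof.
case=> hf h; split; first by rewrite /Kst_free Kst_tr.
case: h => -[S [hS [h1 h2]]]; [right|left]; exists S; split => //; split.
- by move=> v hv u; rewrite in_trG; apply: h1.
- by move=> v hv; rewrite degV_tr; apply: h2.
- by move=> v hv u; rewrite in_trG; apply: h1.
- by move=> v hv; rewrite degU_tr; apply: h2.
Qed.

End Basics.

Definition nbU n (G : bigraph n) u := [set v | (u, v) \in G].

Section Main.
Variables (n k : nat) (G : bigraph n).
Hypothesis hsat : Kst_saturated G k.+1 k.+2.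

Lemma lift_edges u0 v (A B : {set 'I_n}) : u0 \notin A ->
  (forall a b, a \in A -> b \in B -> (a, b) \in (u0, v) |: G) ->
  forall a b, a \in A -> b \in B -> (a, b) \in G.
Proof.
move=> hu h a b ha hb; have := h a b ha hb; rewrite in_setU1 xpair_eqE.
case: eqP => [e|//]; by rewrite -e ha in hu.
Qed.

Lemma sub_nb u0 v (B : {set 'I_n}) :
  (forall b, b \in B -> (u0, b) \in (u0, v) |: G) -> B \subset v |: nbU G u0.
Proof.
move=> h; apply/subsetP => b hb; have := h b hb.
by rewrite !in_setU1 xpair_eqE eqxx inE.
Qed.

Lemma sat_low u0 v : (u0, v) \notin G -> degU G u0 <= k ->
  degU G u0 = k /\ exists A : {set 'I_n}, [/\ #|A| = k.+1, u0 \notin A &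
    forall a, a \in A -> (a, v) \in G /\ forall w, (u0, w) \in G -> (a, w) \in G].
Proof.
move=> hv hd; have [hfree hs] := hsat.
have hc : #|v |: nbU G u0| <= k.+1.
  have {}hd : #|nbU G u0| <= k := hd; rewrite cardsU1; have := leq_b1 (v \notin nbU G u0); lia.
case: (hs _ _ hv) => -[A [B [hA hB hAB]]].
- case: (boolP (u0 \in A)) => hu0.
    have := subset_leq_card (sub_nb (fun b hb => hAB u0 b hu0 hb)) ; rewrite hB => h; by have := leq_trans h hc; rewrite ltnn.
  exfalso; apply: hfree; left; exists A, B; split => //; exact: lift_edges hAB.
- case: (boolP (u0 \in A)) => hu0; last first.
    exfalso; apply: hfree; right; exists A, B; split => //; exact: lift_edges hAB.
  have hsub := sub_nb (fun b hb => hAB u0 b hu0 hb).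
  have hBe : B = v |: nbU G u0.
    by apply/eqP; rewrite eqEcard hsub /= hB.
  have hdeg : degU G u0 = k.
    have h := subset_leq_card hsub; rewrite hB cardsU1 in h.
    have {}h : k.+1 <= (v \notin nbU G u0) + #|nbU G u0| := h.
    have {}hd : #|nbU G u0| <= k := hd; change (#|nbU G u0| = k).
    have := leq_b1 (v \notin nbU G u0); lia.
  have hG : forall x y, x \in A :\ u0 -> y \in B -> (x, y) \in G.
    apply: (lift_edges (u0 := u0) (v := v)); first by rewrite !inE eqxx.
    by move=> x y /setD1P [_ hx] hy; apply: hAB.
  split => //; exists (A :\ u0); split.
  - by move: hA; rewrite (cardsD1 u0 A) hu0 => -[].
  - by rewrite !inE eqxx.
  - move=> a ha; split; first by apply: hG => //; rewrite hBe !inE eqxx.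
    by move=> w hw; apply: hG => //; rewrite hBe !inE hw orbT.
Qed.

Lemma deg_ge u : k <= n -> k <= degU G u.
Proof.
move=> hkn; rewrite leqNgt; apply/negP => hlt.
have [v hv] : exists v, (u, v) \notin G.
  apply/existsP; rewrite -negb_forall; apply/negP => /forallP hall.
  have : nbU G u = setT by apply/setP => v; rewrite !inE hall.
  move: hlt; rewrite /degU -/(nbU G u) => + e; rewrite e cardsT card_ord; lia.
have [e _] := sat_low hv (ltnW hlt); lia.
Qed.

End Main.

Lemma sum_pointwise (I : finType) (P : pred I) (a b : I -> nat) :
  (forall i, P i -> b i <= a i) -> \sum_(i | P i) a i <= \sum_(i | P i) b i ->
  forall i, P i -> a i = b i.
Proof.
move=> h hs i hi.
have L := leqif_sum (fun i hi => leqif_eq (h i hi)).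
have e : \sum_(i | P i) b i == \sum_(i | P i) a i by rewrite eqn_leq L.1 hs.
by rewrite L.2 in e; move/forall_inP: e => /(_ i hi) /eqP ->.
Qed.

Lemma card_sep (T : finType) (A : {set T}) (P : pred T) :
  #|[set x in A | P x]| = \sum_(x in A) P x.
Proof.
rewrite -sum1_card big_mkcond [RHS]big_mkcond /=; apply: eq_bigr => x _.
by rewrite !inE; case: (x \in A); case: (P x).
Qed.

Section Bound.
Variables (n k : nat) (G : bigraph n).
Hypothesis hsat : Kst_saturated G k.+1 k.+2.
Variable u0 : 'I_n.
Hypothesis hd0 : degU G u0 <= k.
Hypothesis hkn : k < n.

Let W := nbU G u0.
Let C := [set u | (u != u0) && (W \subset nbU G u)].
Let c v := #|[set u in C | (u, v) \in G]|.
Let e u := #|nbU G u :\: W|.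

Lemma exists_out (X : {set 'I_n}) : #|X| < n -> exists v, v \notin X.
Proof.
move=> h; apply/existsP; rewrite -negb_forall; apply/negP => /forallP hall.
have : X = setT by apply/setP => v; rewrite !inE hall.
by move=> eX; move: h; rewrite eX cardsT card_ord ltnn.
Qed.

Lemma W_card : #|W| = k.
Proof.
have [v hv] := exists_out (leq_ltn_trans hd0 hkn).
have hv' : (u0, v) \notin G by move: hv; rewrite inE.
by have [h _] := sat_low hsat hv' hd0; exact: h.
Qed.

Lemma c_ge v : v \notin W -> k.+1 <= c v.
Proof.
move=> hv; have hv' : (u0, v) \notin G by move: hv; rewrite inE.
have [_ [A [hA hu hall]]] := sat_low hsat hv' hd0.
rewrite -hA; apply: subset_leq_card; apply/subsetP => a ha.
have [hav haw] := hall a ha.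
rewrite !inE hav andbT; apply/andP; split.
  by apply: contraNneq hu => <-.
by apply/subsetP => w; rewrite !inE => /haw.
Qed.

Lemma deg_C u : u \in C -> degU G u = k + e u.
Proof.
rewrite inE => /andP [_ hW].
have -> : degU G u = #|nbU G u| by [].
by rewrite -W_card /e -(cardsID W (nbU G u)) (setIidPr hW).
Qed.

Lemma sum_e : \sum_(u in C) e u = \sum_(v in ~: W) c v.
Proof.
have -> : \sum_(u in C) e u = \sum_(u in C) \sum_(v in ~: W) ((u, v) \in G).
  apply: eq_bigr => u _; rewrite /e -card_sep; apply: eq_card => v.
  by rewrite !inE andbC.
rewrite exchange_big; apply: eq_bigr => v _; by rewrite /c card_sep.
Qed.

Let lower u := k + (if u \in C then e u else 0).

Lemma deg_lower u : lower u <= degU G u.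
Proof.
rewrite /lower; case: ifP => hu; first by rewrite deg_C.
by rewrite addn0; apply: deg_ge => //; apply: ltnW.
Qed.

Lemma sum_lower : \sum_u lower u = k * n + \sum_(v in ~: W) c v.
Proof.
rewrite big_split /= sum_nat_const cardT size_enum_ord mulnC; congr (_ + _).
by rewrite -sum_e [RHS]big_mkcond.
Qed.

Lemma sum_c : (n - k) * k.+1 <= \sum_(v in ~: W) c v.
Proof.
have -> : (n - k) * k.+1 = \sum_(v in ~: W) k.+1.
  by rewrite sum_nat_const; congr (_ * _); rewrite cardsCs setCK W_card card_ord.
apply: leq_sum => v; rewrite inE; exact: c_ge.
Qed.

Lemma sum_deg_lower : \sum_u lower u <= \sum_u degU G u.
Proof. by apply: leq_sum => u _; exact: deg_lower. Qed.

Lemma bound : k * n + (n - k) * k.+1 <= \sum_u degU G u.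
Proof.
apply: (leq_trans _ sum_deg_lower).
by rewrite sum_lower leq_add2l sum_c.
Qed.

Section Eq.
Hypothesis heq : \sum_u degU G u <= k * n + (n - k) * k.+1.

Lemma eq_lower u : degU G u = lower u.
Proof.
apply: (@sum_pointwise _ (fun _ => true)) => // [i _|]; first exact: deg_lower.
apply: leq_trans heq _; by rewrite sum_lower leq_add2l sum_c.
Qed.

Lemma eq_c v : v \notin W -> c v = k.+1.
Proof.
move=> hv.
have h : \sum_(v in ~: W) c v <= \sum_(v in ~: W) k.+1.
  rewrite sum_nat_const cardsCs setCK W_card card_ord.
  have := leq_trans sum_deg_lower heq.
  by rewrite sum_lower leq_add2l.
apply: (sum_pointwise _ h) => [i|]; first by rewrite inE; apply: c_ge.
by rewrite inE.
Qed.

Lemma eq_X u : u != u0 -> u \notin C -> degU G u = k.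
Proof. by move=> _ hu; rewrite eq_lower /lower (negbTE hu) addn0. Qed.


Hypothesis h2k : k + k < n.

Lemma all_C x : x != u0 -> x \in C.
Proof.
move=> hx; apply/negPn/negP => hxC.
have [hfree _] := hsat.
have dx := eq_X hx hxC.
have dx' : #|nbU G x| = k := dx.
have [w hwW hwW'] : exists2 w, w \in W & w \notin nbU G x.
  by apply/subsetPn; move: hxC; rewrite inE hx.
have [v1 hv1] : exists v1, v1 \notin W :|: nbU G x.
  apply: exists_out; have h := (leq_card_setU W (nbU G x)).1.
  rewrite W_card dx' in h; exact: leq_ltn_trans h h2k.
move: hv1; rewrite in_setU negb_or => /andP [hv1W hv1W'].
have hxv1 : (x, v1) \notin G by move: hv1W'; rewrite inE.
have hdx : degU G x <= k by rewrite dx.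
have [_ [A [hA hxA hall]]] := sat_low hsat hxv1 hdx.
have hAC : forall a, a \in A -> a \in C.
  move=> a ha; have [hav haw] := hall a ha.
  apply/negPn/negP => haC.
  have hau : a != u0.
    apply/eqP => ea; move: hv1W; rewrite inE -ea hav //.
  have da : #|nbU G a| = k := eq_X hau haC.
  have hsub : v1 |: nbU G x \subset nbU G a.
    apply/subsetP => y; rewrite in_setU1 => /orP [/eqP -> | hy].
      by rewrite inE.
    by rewrite inE; apply: haw; move: hy; rewrite inE.
  have := subset_leq_card hsub; rewrite cardsU1 hv1W' dx' da; lia.
apply: hfree; left; exists A, (v1 |: (w |: nbU G x)); split => //.
  have hv1w : v1 \notin w |: nbU G x.
    rewrite in_setU1 negb_or hv1W' andbT; apply: contraNneq hv1W => ->; done.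
  by rewrite cardsU1 hv1w cardsU1 hwW' dx'.
move=> a b ha; rewrite !in_setU1 => /orP [/eqP -> | /orP [/eqP -> | hb]].
- by have [] := hall a ha.
- have := hAC a ha; rewrite inE => /andP [_ /subsetP /(_ w hwW)].
  by rewrite inE.
- by have [_ h] := hall a ha; apply: h; move: hb; rewrite inE.
Qed.

Lemma eq_struct : (forall v, v \in W -> forall u, (u, v) \in G) /\
  (forall v, v \notin W -> degV G v = k.+1).
Proof.
split.
  move=> v hv u; case: (eqVneq u u0) => [-> | hu]; first by move: hv; rewrite inE.
  by have := all_C hu; rewrite inE => /andP [_ /subsetP /(_ v hv)]; rewrite inE.
move=> v hv; rewrite -(eq_c hv) /degV /c; apply: eq_card => u; rewrite !inE.
case: (eqVneq u u0) => [-> | hu].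
  by move: hv; rewrite inE => /negbTE ->; rewrite andbF.
by have := all_C hu; rewrite inE => /andP [_ hW]; rewrite hW.
Qed.

End Eq.
End Bound.

Definition fval n k := k * n + (n - k) * k.+1.

Lemma main_U n k (G : bigraph n) u0 :
  Kst_saturated G k.+1 k.+2 -> degU G u0 <= k -> k + k < n ->
  fval n k <= #|G| /\
  (#|G| <= fval n k -> in_F G k.+1 k.+2 /\ mindeg_eq G k).
Proof.
move=> hsat hd hn; have hkn : k < n by lia.
rewrite /fval card_sumU; split; first apply: (bound hsat hd hkn).
move=> heq; have [h1 h2] := eq_struct hsat hd hkn heq hn.
have hW := W_card hsat hd hkn.
split.
  split; first by case: hsat.
  right; exists (nbU G u0); split; first by rewrite hW subn1.
  by split.
split.
- by move=> u; apply: deg_ge => //; apply: ltnW.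
- move=> v; rewrite -degU_tr; apply: deg_ge; first exact: sat_tr.
  exact: ltnW.
- by left; exists u0.
Qed.

Lemma main n k (G : bigraph n) :
  Kst_saturated G k.+1 k.+2 -> mindeg_lt G k.+1 -> k + k < n ->
  fval n k <= #|G| /\
  (#|G| <= fval n k -> in_F G k.+1 k.+2 /\ mindeg_eq G k).
Proof.
move=> hsat [[u hu] | [v hv]] hn; first exact: (main_U hsat hu hn).
have hsat' := sat_tr hsat.
have hv' : degU (trG G) v <= k by rewrite degU_tr.
have [h1 h2] := main_U hsat' hv' hn.
rewrite card_tr in h1 h2; split => // hle.
have [hF hm] := h2 hle.
by rewrite -(trGK G); split; [apply: in_F_tr | apply: mindeg_eq_tr].
Qed.

Lemma sum_split n (S : {set 'I_n}) (F : 'I_n -> nat) a b :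
  (forall v, v \in S -> F v = a) -> (forall v, v \notin S -> F v = b) ->
  \sum_v F v = #|S| * a + (n - #|S|) * b.
Proof.
move=> ha hb; rewrite (bigID (fun v => v \in S)) /=.
rewrite (eq_bigr (fun _ => a)) // sum_nat_const.
rewrite (eq_bigl (fun v => v \in ~: S)); last by move=> v; rewrite inE.
rewrite (eq_bigr (fun _ => b)); last by move=> v; rewrite inE; apply: hb.
by rewrite sum_nat_const cardsCs setCK card_ord.
Qed.

Lemma count_F n k (G : bigraph n) : in_F G k.+1 k.+2 -> #|G| = fval n k.
Proof.
case=> _ [[S [hS [h1 h2]]] | [S [hS [h1 h2]]]]; rewrite subn1 /= in hS.
- rewrite card_sumU (sum_split (a := n) (b := k.+1) (S := S)) ?hS //.
  move=> u hu; rewrite /degU -[RHS](card_ord n) -cardsT; apply: eq_card => v.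
  by rewrite !inE h1.
- rewrite card_sumV (sum_split (a := n) (b := k.+1) (S := S)) ?hS //.
  move=> v hv; rewrite /degV -[RHS](card_ord n) -cardsT; apply: eq_card => u.
  by rewrite !inE h1.
Qed.

Lemma F_sat n k (G : bigraph n) (S : {set 'I_n}) :
  #|S| = k -> (forall v, v \in S -> forall u, (u, v) \in G) ->
  (forall v, v \notin S -> degV G v = k.+1) ->
  (forall v1 v2, v1 \notin S -> v2 \notin S ->
     (forall u, ((u, v1) \in G) = ((u, v2) \in G)) -> v1 = v2) ->
  Kst_saturated G k.+1 k.+2.
Proof.
move=> hS hfull hdeg hinj; split.
- move=> [[A [B [hA hB hAB]]] | [A [B [hA hB hAB]]]].
  + have h1 : 1 < #|B :\: S|.
      have := cardsID S B; have := subset_leq_card (subsetIr B S).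
      rewrite hB hS; lia.
    have [v1 [v2 [hv1 hv2 hne]]] := card_gt1P h1.
    have key : forall v, v \in B :\: S -> [set u | (u, v) \in G] = A.
      move=> v; rewrite in_setD => /andP [hvS hvB].
      apply/esym/eqP; rewrite eqEcard; apply/andP; split.
        by apply/subsetP => u hu; rewrite inE; apply: hAB.
      by have := hdeg v hvS; rewrite /degV => ->; rewrite hA.
    move: hv1 hv2 (key _ hv1) (key _ hv2); rewrite !in_setD.
    move=> /andP [h1S _] /andP [h2S _] e1 e2; move/eqP: hne; apply.
    apply: hinj => // u.
    have : [set u | (u, v1) \in G] = [set u | (u, v2) \in G] by rewrite e1 e2.
    by move/setP/(_ u); rewrite !inE.
  + have h1 : 0 < #|B :\: S|.
      have := cardsID S B; have := subset_leq_card (subsetIr B S).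
      rewrite hB hS; lia.
    have [v] := card_gt0P h1; rewrite in_setD => /andP [hvS hvB].
    have : A \subset [set u | (u, v) \in G].
      by apply/subsetP => u hu; rewrite inE; apply: hAB.
    move/subset_leq_card; have := hdeg v hvS; rewrite /degV => ->.
    by rewrite hA ltnn.
- move=> u v huv.
  have hvS : v \notin S by apply: contra huv => hv; apply: hfull.
  right; exists (u |: [set x | (x, v) \in G]), (v |: S); split.
  + by rewrite cardsU1 inE (negbTE huv) -/(degV G v) hdeg.
  + by rewrite cardsU1 hvS hS.
  + move=> a b; rewrite !in_setU1 !inE => /orP [/eqP -> | ha] /orP [/eqP -> | hb].
    * by rewrite !eqxx.
    * by rewrite hfull ?orbT.
    * by rewrite ha orbT.
    * by rewrite hfull ?orbT.
Qed.

Lemma card_nat n (P : pred nat) : #|[set u : 'I_n | P u]| = \sum_(0 <= i < n) P i.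
Proof.
rewrite -sum1_card big_mkcond /= big_mkord; apply: eq_bigr => i _.
by rewrite inE; case: (P i).
Qed.

Lemma sum_range n a b : a <= b -> b <= n ->
  \sum_(0 <= i < n) ((a <= i < b) : nat) = b - a.
Proof.
move=> hab hbn.
rewrite (@big_cat_nat _ _ _ a 0 n) ?(leq_trans hab hbn) //=.
rewrite (@big_cat_nat _ _ _ b a n) //=.
rewrite (eq_big_nat _ _ (F2 := fun => 0)); last by move=> i hi; lia.
rewrite [X in _ + (X + _)](eq_big_nat _ _ (F2 := fun => 1)); last by move=> i hi; lia.
rewrite [X in _ + (_ + X)](eq_big_nat _ _ (F2 := fun => 0)); last by move=> i hi; lia.
by rewrite !sum_nat_const_nat; lia.
Qed.

Definition Hc n k : bigraph n :=
  [set p : 'I_n * 'I_n | (p.2 < k) ||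
     ((p.2 < n.-1) && ((0 < p.1 <= k) || (p.1 == (p.2).+1 :> nat))) ||
     ((p.2 == n.-1 :> nat) && (1 < p.1 <= k.+2))].

Lemma construct n k : 0 < k -> k.+3 <= n ->
  exists H : bigraph n, [/\ Kst_saturated H k.+1 k.+2, mindeg_lt H k.+1 &
     #|H| = fval n k].
Proof.
move=> hk hn.
set S := [set v : 'I_n | v < k].
have hS : #|S| = k.
  rewrite (card_nat n (fun i => i < k)).
  rewrite (eq_bigr (fun i => ((0 <= i < k) : nat))); last by move=> i _; rewrite leq0n.
  by rewrite sum_range ?subn0 //; lia.
have hfull : forall v, v \in S -> forall u, (u, v) \in Hc n k.
  by move=> v; rewrite !inE => hv u; rewrite inE /= hv.
have hdeg : forall v, v \notin S -> degV (Hc n k) v = k.+1.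
  move=> v; rewrite inE -leqNgt => hkv.
  have hv := ltn_ord v.
  case: (ltnP v n.-1) => hv1.
  - rewrite /degV (eq_card (B := [set u : 'I_n | (0 < u <= k) || (u == v.+1 :> nat)])); last first.
      move=> u; rewrite !inE /=; apply/idP/idP; lia.
    rewrite (card_nat n (fun i => (0 < i <= k) || (i == v.+1))).
    rewrite (eq_bigr (fun i => ((1 <= i < k.+1) : nat) + ((v.+1 <= i < v.+2) : nat))); last first.
      move=> i _; lia.
    rewrite big_split /= !sum_range //; lia.
  - rewrite /degV (eq_card (B := [set u : 'I_n | 2 <= u < k.+3])); last first.
      move=> u; rewrite !inE /=; apply/idP/idP; lia.
    by rewrite (card_nat n (fun i => 2 <= i < k.+3)) sum_range //; lia.
have hinj : forall v1 v2, v1 \notin S -> v2 \notin S ->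
     (forall u, ((u, v1) \in Hc n k) = ((u, v2) \in Hc n k)) -> v1 = v2.
  move=> v1 v2; rewrite !inE -!leqNgt => h1 h2 he; apply: val_inj => /=.
  have hv1 := ltn_ord v1; have hv2 := ltn_ord v2.
  have o1 : 1 < n by lia.
  have := he (Ordinal o1); rewrite !inE /= => e1.
  case: (ltnP v1 n.-1) => c1.
    have o2 : v1.+1 < n by lia.
    have := he (Ordinal o2); rewrite !inE /= => e2.
    lia.
  case: (ltnP v2 n.-1) => c2.
    have o2 : v2.+1 < n by lia.
    have := he (Ordinal o2); rewrite !inE /= => e2.
    lia.
  lia.
have hsat := F_sat hS hfull hdeg hinj.
exists (Hc n k); split => //.
- have o0 : 0 < n by lia.
  left; exists (Ordinal o0).
  rewrite /degU (eq_card (B := S)) ?hS //.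
  move=> v; rewrite !inE /=; apply/idP/idP; lia.
- apply: count_F; split; first by case: hsat.
  by right; exists S; split; [rewrite hS subn1 | split].
Qed.

Lemma k0_false n (G : bigraph n) : Kst_saturated G 1 2 -> mindeg_lt G 1 -> False.
Proof.
move=> hsat hlt.
have hn : 0 < n by case: hlt => -[x _]; exact: (leq_ltn_trans (leq0n x) (ltn_ord x)).
have [h1 _] := @main n 0 G hsat hlt hn.
have hfree := hsat.1.
have dU : forall u, degU G u <= 1.
  move=> u; rewrite leqNgt; apply/negP => /card_gt1P [v1 [v2 [hv1 hv2 hne]]].
  rewrite !inE in hv1 hv2.
  apply: hfree; left; exists [set u], [set v1; v2]; split.
  - exact: cards1.
  - by rewrite cards2 hne.
  - by move=> a b; rewrite inE => /eqP ->; rewrite !inE => /orP [/eqP -> | /eqP ->].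
have dV : forall v, degV G v <= 1.
  move=> v; rewrite leqNgt; apply/negP => /card_gt1P [u1 [u2 [hu1 hu2 hne]]].
  rewrite !inE in hu1 hu2.
  apply: hfree; right; exists [set u1; u2], [set v]; split.
  - by rewrite cards2 hne.
  - exact: cards1.
  - by move=> a b; rewrite !inE => /orP [/eqP -> | /eqP ->] /eqP ->.
have hsum1 : \sum_(i < n) 1 = n by rewrite sum1_card card_ord.
rewrite /fval mul0n subn0 muln1 in h1.
case: hlt => -[x hx].
- have hle : \sum_(i < n) 1 <= \sum_i degU G i by rewrite hsum1 -card_sumU.
  have := @sum_pointwise _ (fun _ => true) (fun _ => 1) (degU G) (fun u _ => dU u) hle x isT.
  move=> e; move: hx; rewrite -e ltnn //.
- have hle : \sum_(i < n) 1 <= \sum_i degV G i by rewrite hsum1 -card_sumV.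
  have := @sum_pointwise _ (fun _ => true) (fun _ => 1) (degV G) (fun u _ => dV u) hle x isT.
  move=> e; move: hx; rewrite -e ltnn //.
Qed.

Theorem proposition2p2 (t : nat) (ht : 1 < t) :
  exists N : nat, forall n : nat, N <= n ->
    forall G : bigraph n,
      Kst_saturated G (t - 1) t -> mindeg_lt G (t - 1) ->
      ((forall H : bigraph n,
          Kst_saturated H (t - 1) t -> mindeg_lt H (t - 1) ->
          #|G| <= #|H|)
       <-> (in_F G (t - 1) t /\ mindeg_eq G (t - 2))).
Proof.
case: t ht => [|[|k]] // _.
have -> : k.+2 - 1 = k.+1 by lia.
have -> : k.+2 - 2 = k by lia.
exists (k + k + 3) => n hn G hsat hlt.
have hn2 : k + k < n by lia.
have [hlow hup] := main hsat hlt hn2.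
split.
- move=> hmin; apply: hup.
  case: (posnP k) => hk.
    by exfalso; move: hsat hlt; rewrite hk => hsat hlt; exact: (k0_false hsat hlt).
  have hk3 : k.+3 <= n by lia.
  have [H [hHs hHl hHc]] := construct hk hk3.
  by rewrite -hHc; apply: hmin.
- move=> [hF _] H hHs hHl.
  by rewrite (count_F hF); exact: (main hHs hHl hn2).1.
Qed.
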